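(* Let $p\ge 1$ and let $\hat\lambda_1,\ldots,\hat\lambda_p$ be mutually distinct complex numbers lying in the open left half-plane $\{s\in\mathbb{C}:\operatorname{Re}s<0\}$, such that the set $\{\hat\lambda_1,\ldots,\hat\lambda_p\}$ is closed under complex conjugation. Define $$\beta_j=\frac{\prod_{l=1}^{p}(\hat\lambda_j+\hat\lambda_l)}{\prod_{l=1,\,l\neq j}^{p}(\hat\lambda_j-\hat\lambda_l)},\qquad j=1,\ldots,p,$$ and $$\widehat d(s)=1+\sum_{j=1}^{p}\frac{\beta_j}{s-\hat\lambda_j}.$$ Then $|\widehat d(\mathrm{i}\omega)|=1$ for every $\omega\in\mathbb{R}$ (where $\mathrm{i}=\sqrt{-1}$). Consequently, for any sampling nodes $\xi_1,\ldots,\xi_\ell$ on the imaginary axis, the diagonal scaling matrix $\widehat\Delta=\mathrm{diag}\big(1/|\widehat d(\xi_i)|\big)_{i=1}^{\ell}$ is unitary, so for any matrix $\mathcal{A}\in\mathbb{C}^{\ell\times m}$ and vector $h\in\mathbb{C}^{\ell}$ the weighted least-squares problem $\min_x\|\widehat\Delta(\mathcal{A}x-h)\|_2$ has the same solutions as the unweighted problem $\min_x\|\mathcal{A}x-h\|_2$.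
   Context: This arises in Vector Fitting, where a rational approximant is written in barycentric form $\widehat n(s)/\widehat d(s)$ with poles (nodes) $\hat\lambda_j$, and each iteration solves a least-squares problem whose rows are weighted by $1/|\widehat d(\xi_i)|$ at the sampling nodes $\xi_i$. The $\hat\lambda_j$ here are the mirror images $-\lambda$ of unstable poles $\lambda$ (poles in the open right half-plane) of the current denominator; the $\beta_j$ are chosen so that the zeros of $\widehat d$ are the original unstable poles $-\hat\lambda_j$. *)

(* Defs.v *)
(* Complex numbers are modelled by an arbitrary
   numClosedFieldType C (algebraically closed num field with 'i, 'Re, conjC);
   this includes the complex numbers, so the statement is (more) general. *)
From HB Require Import structures.
From mathcomp Require Import all_boot all_order all_algebra.
Set Implicit Arguments. Unset Strict Implicit. Unset Printing Implicit Defensive.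
Import Order.TTheory GRing.Theory Num.Theory.
Local Open Scope ring_scope.

Section VF.
Variable C : numClosedFieldType.

Definition vf_beta (p : nat) (lam : 'I_p -> C) (j : 'I_p) : C :=
  (\prod_(l < p) (lam j + lam l)) / (\prod_(l < p | l != j) (lam j - lam l)).

Definition vf_dhat (p : nat) (lam : 'I_p -> C) (s : C) : C :=
  1 + \sum_(j < p) vf_beta lam j / (s - lam j).

Definition vf_Delta (p l : nat) (lam : 'I_p -> C) (xi : 'I_l -> C) : 'M[C]_l :=
  diag_mx (\row_(i < l) (`|vf_dhat lam (xi i)|)^-1).

Definition ctrmx (m n : nat) (M : 'M[C]_(m, n)) : 'M[C]_(n, m) :=
  (map_mx (@Num.conj C) M)^T.

Definition unitary_mx (n : nat) (M : 'M[C]_n) : Prop :=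
  ctrmx M *m M = 1%:M /\ M *m ctrmx M = 1%:M.

Definition vnorm2 (n : nat) (v : 'cV[C]_n) : C :=
  sqrtC (\sum_(i < n) `|v i 0| ^+ 2).

Definition wlsq_min (l m : nat) (W : 'M[C]_l) (A : 'M[C]_(l, m)) (h : 'cV[C]_l)
  (x : 'cV[C]_m) : Prop :=
  forall y : 'cV[C]_m, vnorm2 (W *m (A *m x - h)) <= vnorm2 (W *m (A *m y - h)).

Definition lsq_min (l m : nat) (A : 'M[C]_(l, m)) (h : 'cV[C]_l)
  (x : 'cV[C]_m) : Prop :=
  forall y : 'cV[C]_m, vnorm2 (A *m x - h) <= vnorm2 (A *m y - h).
End VF.

(* Main.v *)
Require Import Defs.
From HB Require Import structures.
From mathcomp Require Import all_boot all_order all_algebra.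
From mathcomp Require Import ring.
Import Order.TTheory GRing.Theory Num.Theory.
Set Implicit Arguments. Unset Strict Implicit. Unset Printing Implicit Defensive.
Local Open Scope ring_scope.

Section Aux.
Variable C : numClosedFieldType.

Lemma size_PD p (lam : 'I_p -> C) :
  size (\prod_(l < p) ('X - (lam l)%:P)) = p.+1.
Proof. by rewrite size_prod_XsubC /index_enum -enumT size_enum_ord. Qed.

Lemma size_Pj p (lam : 'I_p -> C) j :
  size (\prod_(l < p | l != j) ('X - (lam l)%:P)) = p.
Proof.
have := size_PD lam; rewrite (bigD1 j) //= size_monicM ?monicXsubC //.
  by rewrite size_XsubC add2n /= => -[].
exact/monic_neq0/monic_prod_XsubC.
Qed.

Lemma poly_id p (lam : 'I_p -> C) : injective lam ->
  \prod_(l < p) ('X - (- lam l)%:P) = \prod_(l < p) ('X - (lam l)%:P)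
   + \sum_(j < p) vf_beta lam j *: \prod_(l < p | l != j) ('X - (lam l)%:P).
Proof.
move=> inj.
set PN := \prod_(l < p) _; set PD := \prod_(l < p) _.
set S := \sum_(j < p) _.
suff: PN - (PD + S) = 0 by move/eqP; rewrite subr_eq0 => /eqP.
apply: (@roots_geq_poly_eq0 _ _ [seq lam i | i <- enum 'I_p]).
- apply/allP => x /mapP [k _ ->]; rewrite /root hornerD hornerN hornerD.
  rewrite /PN /PD /S horner_sum !horner_prod.
  rewrite [X in _ - (X + _)](bigD1 k) //= hornerXsubC subrr mul0r add0r.
  rewrite [X in _ - X](bigD1 k) //= [X in _ - (_ + X)]big1; last first.
    move=> j /negbTE jk.
    rewrite hornerZ horner_prod (bigD1 k) /=; last by rewrite eq_sym jk.
    by rewrite hornerXsubC subrr mul0r mulr0.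
  rewrite addr0 hornerZ horner_prod.
  under eq_bigr do rewrite hornerXsubC opprK.
  under [X in _ - _ * X]eq_bigr do rewrite hornerXsubC.
  rewrite /vf_beta divfK ?subrr //.
  apply/prodf_neq0 => l lk; rewrite subr_eq0; apply/eqP => /inj /eqP.
  by rewrite eq_sym (negbTE lk).
- by rewrite map_inj_uniq // enum_uniq.
rewrite size_map size_enum_ord opprD addrA.
apply: leq_trans (size_polyD _ _) _; rewrite geq_max; apply/andP; split.
  apply/leq_sizeP => j hj; rewrite coefB.
  have lN : lead_coef PN = 1 by apply: lead_coef_prod_XsubC.
  have lD : lead_coef PD = 1 by apply: lead_coef_prod_XsubC.
  have sN : size PN = p.+1 by apply: size_PD.
  have sD : size PD = p.+1 by apply: size_PD.
  move: hj; rewrite leq_eqVlt => /orP [/eqP <-|hj].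
    by move: lN lD; rewrite !lead_coefE sN sD /= => -> ->; rewrite subrr.
  by rewrite !nth_default ?subr0 // ?sN ?sD.
rewrite size_opp /S; apply: (big_ind (fun q : {poly C} => size q <= p)%N) => //.
  by rewrite size_poly0.
  by move=> a b ha hb; apply: leq_trans (size_polyD _ _) _; rewrite geq_max ha hb.
by move=> j _; apply: leq_trans (size_scale_leq _ _) _; rewrite size_Pj.
Qed.

Lemma dhat_eq p (lam : 'I_p -> C) s : injective lam -> (forall j, s - lam j != 0) ->
  vf_dhat lam s = (\prod_(l < p) (s + lam l)) / \prod_(l < p) (s - lam l).
Proof.
move=> inj hs.
have := congr1 (fun q => q.[s]) (poly_id inj).
rewrite /= hornerD horner_sum !horner_prod.
under eq_bigr do rewrite hornerXsubC opprK.
under [\prod_(l < p) ('X - _).[s]]eq_bigr do rewrite hornerXsubC.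
under [\sum_(j < p) _]eq_bigr do rewrite hornerZ horner_prod.
move=> ->.
have Dnz : \prod_(l < p) (s - lam l) != 0 by apply/prodf_neq0 => l _; apply: hs.
rewrite /vf_dhat mulrDl divff //; congr (1 + _).
rewrite mulr_suml; apply: eq_bigr => j _.
under eq_bigr do rewrite hornerXsubC.
rewrite [X in _ = _ / X](bigD1 j) //=.
have Pnz : \prod_(l < p | l != j) (s - lam l) != 0 by apply/prodf_neq0 => l _; apply: hs.
have := hs j; move: Pnz.
set a := \prod_(l < p | l != j) _; set b := s - lam j.
by move=> ha hb; field; apply/andP; split.
Qed.

End Aux.

Unset Implicit Arguments.

Theorem proposition4p1 (C : numClosedFieldType) (p : nat) (lam : 'I_p -> C) :
  (0 < p)%N ->
  injective lam ->
  (forall j, 'Re (lam j) < 0) ->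
  (forall j, exists k, lam k = (lam j)^*) ->
  (forall omega : C, omega \is Num.real -> `|vf_dhat lam ('i * omega)| = 1) /\
  (forall (l m : nat) (xi : 'I_l -> C),
     (forall i, 'Re (xi i) = 0) ->
     unitary_mx (vf_Delta lam xi) /\
     (forall (A : 'M[C]_(l, m)) (h : 'cV[C]_l) (x : 'cV[C]_m),
        wlsq_min (vf_Delta lam xi) A h x <-> lsq_min A h x)).
Proof.
move=> _ inj hre hconj.
have hc : forall j, exists k, lam k == (lam j)^*.
  by move=> j; have [k hk] := hconj j; exists k; apply/eqP.
pose sg j := xchoose (hc j).
have hsig : forall j, lam (sg j) = (lam j)^* by move=> j; apply/eqP/(xchooseP (hc j)).
have sinj : injective sg.
  move=> a b /(congr1 lam); rewrite !hsig => /(congr1 (@Num.conj C)).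
  by rewrite !conjCK => /inj.
have part1 : forall omega : C, omega \is Num.real -> `|vf_dhat lam ('i * omega)| = 1.
  move=> w wr; set s := 'i * w.
  have Res : 'Re s = 0 by rewrite /s -[_ * w]add0r Re_rect // real0.
  have hs : forall j, s - lam j != 0.
    move=> j; apply/eqP => e.
    have : 'Re (s - lam j) = 0 by rewrite e raddf0.
    rewrite raddfB /= Res sub0r => /eqP; rewrite oppr_eq0 => /eqP h.
    by move: (hre j); rewrite h ltxx.
  have Dnz : \prod_(l < p) `|s - lam l| != 0.
    by rewrite -normr_prod normr_eq0; apply/prodf_neq0 => l _; apply: hs.
  have Heq : \prod_(l < p) `|s - lam l| = \prod_(l < p) `|s + lam l|.
    rewrite [RHS](reindex_inj sinj) /=; apply: eq_bigr => l _; rewrite hsig.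
    rewrite -[LHS]norm_conjC rmorphB /s rmorphM /=.
    have -> : 'i^* * w^* = - ('i * w) by rewrite conjCi conj_Creal // mulNr.
    by rewrite -opprD normrN.
  by rewrite dhat_eq // normf_div !normr_prod -Heq divff.
split=> // l m xi hxi.
have D1 : vf_Delta lam xi = 1%:M.
  apply/matrixP => i j; rewrite /vf_Delta !mxE.
  by rewrite (Crect (xi i)) hxi add0r part1 ?Creal_Im // invr1.
split.
  have ct : ctrmx (1%:M : 'M[C]_l) = 1%:M.
    apply/matrixP => i j; rewrite !mxE eq_sym.
    by case: (_ == _); rewrite ?mulr1n ?mulr0n ?conjC1 ?conjC0.
  by rewrite /unitary_mx D1 ct mul1mx.
move=> A h x; rewrite /wlsq_min /lsq_min D1.
by split=> H y; have := H y; rewrite !mul1mx.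
Qed.
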